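(* Suppose $f:\{0,1\}^n\to\mathbb{R}$ is submodular and $f(0)>0$. Then there are at least $2^{n-1}$ points $x\in\{0,1\}^n$ such that $f(x)\neq 0$.
   Context: $f$ is submodular if $f(x+\mathbf{e}_i)-f(x)\ge f(y+\mathbf{e}_i)-f(y)$ for all $i$ and all $x\le y$ (coordinatewise) with $x_i=y_i=0$, where $\mathbf{e}_i$ is the $i$-th standard basis vector. *)

(* Defs.v *)
From mathcomp Require Import all_boot all_order all_algebra.
Set Implicit Arguments. Unset Strict Implicit. Unset Printing Implicit Defensive.
Import Order.TTheory GRing.Theory Num.Theory.
Local Open Scope ring_scope.

Definition cube (n : nat) := {ffun 'I_n -> bool}.

Definition cube0 (n : nat) : cube n := [ffun => false].

(* x + e_i for x with x_i = 0: set coordinate i to 1. *)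
Definition cube_add (n : nat) (x : cube n) (i : 'I_n) : cube n :=
  [ffun j => if j == i then true else x j].

Definition cube_le (n : nat) (x y : cube n) : Prop :=
  forall j : 'I_n, x j ==> y j.

Definition submodular (R : realFieldType) (n : nat) (f : cube n -> R) : Prop :=
  forall (i : 'I_n) (x y : cube n),
    cube_le x y -> x i = false -> y i = false ->
    f (cube_add x i) - f x >= f (cube_add y i) - f y.

(* Main.v *)
Require Import Defs.
From mathcomp Require Import all_boot all_order all_algebra.
Import Order.TTheory GRing.Theory Num.Theory.
Local Open Scope ring_scope.
Set Implicit Arguments. Unset Strict Implicit.

Section S.
Variable n : nat.

Definition sub (a : cube n) (S : {set 'I_n}) : {set cube n} :=
  [set x : cube n | [forall j, (j \notin S) ==> (x j == a j)]].

Lemma cube_addE (x : cube n) i j : cube_add x i j = if j == i then true else x j.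
Proof. by rewrite /cube_add ffunE. Qed.

Lemma sub_split (a : cube n) (S : {set 'I_n}) i :
  i \in S -> a i = false ->
  sub a S = sub a (S :\ i) :|: sub (cube_add a i) (S :\ i).
Proof.
move=> iS ai; apply/setP=> x; rewrite !inE.
apply/idP/idP.
- move/forallP=> H; case xi: (x i).
  + apply/orP; right; apply/forallP=> j; apply/implyP; rewrite !inE cube_addE.
    case: eqP => [->|ji] //=; first by rewrite xi.
    by move=> jS; exact: (implyP (H j) jS).
  + apply/orP; left; apply/forallP=> j; apply/implyP; rewrite !inE.
    case: eqP => [->|ji] //=; first by rewrite xi ai.
    by move=> jS; exact: (implyP (H j) jS).
- case/orP=> /forallP H; apply/forallP=> j; apply/implyP=> jS;
   have jS' : j \notin S :\ i by rewrite !inE negb_and jS orbT.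
  + exact: (implyP (H j) jS').
  + have := implyP (H j) jS'; rewrite cube_addE.
    by case: (j =P i) => [ji|] //; rewrite ji iS in jS.
Qed.

Lemma sub_disj (a : cube n) (S : {set 'I_n}) i :
  i \in S -> a i = false ->
  sub a (S :\ i) :&: sub (cube_add a i) (S :\ i) = set0.
Proof.
move=> iS ai; apply/setP=> x; rewrite !inE.
apply/negbTE; apply/negP=> /andP[/forallP H1 /forallP H2].
have iS' : i \notin S :\ i by rewrite !inE eqxx.
have := implyP (H1 i) iS'; have := implyP (H2 i) iS'.
by rewrite cube_addE eqxx ai => /eqP -> .
Qed.

Lemma add_free (a : cube n) (S : {set 'I_n}) i :
  (forall j, j \in S -> a j = false) ->
  forall j, j \in S :\ i -> cube_add a i j = false.
Proof.
move=> H j; rewrite !inE cube_addE => /andP[/negbTE -> jS]; exact: H.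
Qed.

Lemma sub_restr (a : cube n) (S : {set 'I_n}) i :
  (forall j, j \in S -> a j = false) ->
  forall j, j \in S :\ i -> a j = false.
Proof. by move=> H j; rewrite !inE => /andP[_ ]; exact: H. Qed.

Lemma card_sub k : forall (S : {set 'I_n}) (a : cube n), #|S| = k ->
  (forall j, j \in S -> a j = false) -> #|sub a S| = (2 ^ k)%N.
Proof.
elim: k => [|k IH] S a cS H.
  move/eqP: cS; rewrite cards_eq0 => /eqP ->.
  rewrite expn0; apply/eqP/cards1P; exists a; apply/setP=> x; rewrite !inE.
  apply/forallP/eqP => [Hx|->]; last by move=> j; rewrite eqxx implybT.
  by apply/ffunP=> j; apply/eqP; apply: (implyP (Hx j)); rewrite inE.
have [i iS] : exists i, i \in S.
  by apply/set0Pn; rewrite -card_gt0 cS.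
have cS' : #|S :\ i| = k by rewrite (cardsD1 i S) iS in cS; case: cS.
rewrite (sub_split iS (H i iS)).
have := cardsUI (sub a (S :\ i)) (sub (cube_add a i) (S :\ i)).
rewrite sub_disj // ?(H i iS) // cards0 addn0 => ->.
rewrite (IH _ _ cS' (sub_restr H)) (IH _ _ cS' (add_free H)).
by rewrite expnS mul2n addnn.
Qed.

Variable R : realFieldType.
Variable f : cube n -> R.
Hypothesis hf : submodular f.

Definition nz (A : {set cube n}) := [set x in A | f x != 0].

Lemma nzU A B : nz (A :|: B) = nz A :|: nz B.
Proof. by apply/setP=> x; rewrite !inE andb_orl. Qed.

Lemma main k : forall (S : {set 'I_n}) (a : cube n), #|S| = k ->
  (forall j, j \in S -> a j = false) -> 0 < f a ->
  (2 ^ k.-1 <= #|nz (sub a S)|)%N.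
Proof.
elim: k => [|k IH] S a cS H fa.
  rewrite expn0 card_gt0; apply/set0Pn; exists a; rewrite !inE.
  apply/andP; split; last by rewrite gt_eqF.
  by apply/forallP=> j; rewrite eqxx implybT.
have [i iS] : exists i, i \in S.
  by apply/set0Pn; rewrite -card_gt0 cS.
have cS' : #|S :\ i| = k by rewrite (cardsD1 i S) iS in cS; case: cS.
have ai := H i iS.
rewrite (sub_split iS ai) nzU /=.
have Hdisj : nz (sub a (S :\ i)) :&: nz (sub (cube_add a i) (S :\ i)) = set0.
  apply/setP=> x; have := sub_disj iS ai => /setP /(_ x).
  rewrite !inE => e; rewrite andbACA e; done.
have := cardsUI (nz (sub a (S :\ i))) (nz (sub (cube_add a i) (S :\ i))).
rewrite Hdisj cards0 addn0 => ->.
have [fa'|fa'] := ltP 0 (f (cube_add a i)).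
  have h1 := IH _ _ cS' (sub_restr H) fa.
  have h2 := IH _ _ cS' (add_free H) fa'.
  apply: leq_trans (leq_add h1 h2).
  by case: k {IH cS' h1 h2 cS} => [|k] //=; rewrite expnS mul2n addnn.
set A := sub a (S :\ i).
have Hlt : forall x, x \in A -> f (cube_add x i) != f x.
  move=> x; rewrite inE => /forallP Hx.
  have xi : x i = false.
    have := implyP (Hx i); rewrite !inE eqxx /= ai => /(_ isT) /eqP //.
  have le : cube_le a x.
    move=> j; case aj: (a j) => //=.
    case jS: (j \in S :\ i); first by rewrite (sub_restr H jS) in aj.
    by have := implyP (Hx j); rewrite jS aj => /(_ isT) /eqP.
  have := hf le ai xi.
  move=> hs; apply/negP=> /eqP e; move: hs; rewrite e subrr.
  rewrite subr_ge0 => h; have := lt_le_trans fa (le_trans h fa').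
  by rewrite ltxx.
pose g x := if f x != 0 then x else cube_add x i.
have gin : {in A &, injective g}.
  move=> x y xA yA; rewrite /g.
  have xi : x i = false.
    move: (xA); rewrite inE => /forallP /(_ i); rewrite !inE eqxx /= ai => /eqP //.
  have yi : y i = false.
    move: yA; rewrite inE => /forallP /(_ i); rewrite !inE eqxx /= ai => /eqP //.
  case: (f x != 0); case: (f y != 0) => e.
  - done.
  - by have := f_equal (fun z : cube n => z i) e; rewrite /= cube_addE eqxx xi.
  - by have := f_equal (fun z : cube n => z i) e; rewrite /= cube_addE eqxx yi.
  - apply/ffunP=> j; have := f_equal (fun z : cube n => z j) e.
    rewrite /= !cube_addE; case: eqP => [->|//] _; by rewrite xi yi.
have cA := card_sub cS' (sub_restr H).
rewrite /= -cA -(card_in_imset gin).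
apply: leq_trans (subset_leq_card _) (leq_card_setU _ _).
apply/subsetP=> y /imsetP [x xA ->]; rewrite /g.
have xi : x i = false.
  move: (xA); rewrite inE => /forallP /(_ i); rewrite !inE eqxx /= ai => /eqP //.
case: ifP => fx.
  by apply: (subsetP (subsetUl _ _)); rewrite inE xA fx.
apply: (subsetP (subsetUr (nz A) _)).
rewrite !inE; apply/andP; split.
  apply/forallP=> j; apply/implyP=> jS; rewrite !cube_addE.
  case: (j =P i) => // _; move: (xA); rewrite inE => /forallP /(_ j) /implyP /(_ jS) //.
by move/negbFE: fx => /eqP fx0; have := Hlt x xA; rewrite fx0.
Qed.
End S.

Theorem lemma6 (R : realFieldType) (n : nat) (f : cube n -> R) :
  submodular f -> 0 < f (cube0 n) ->
  (2 ^ n.-1 <= #|[set x : cube n | f x != 0%R]|)%N.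
Proof.
move=> hf f0.
have := @main n R f hf n [set: 'I_n] (cube0 n).
rewrite cardsT card_ord => /(_ erefl) h.
have hz : forall j, j \in [set: 'I_n] -> cube0 n j = false.
  by move=> j _; rewrite /cube0 ffunE.
have := h hz f0.
move/leq_trans; apply; apply/subset_leq_card/subsetP=> x; rewrite !inE.
by case/andP.
Qed.
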